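(* Consider the weighted-bins process with unit-weight balls and an $(\alpha,\beta)$-biased distribution $\mathcal D$ with $\alpha,\beta>1$, and let $0<\epsilon\le\frac{2\ln\left(\frac{\alpha\beta-1}{\alpha\beta-\beta}\right)}{\ln\left(\frac{\alpha\beta-1}{\alpha-1}\right)}-1$. Then for every $t\ge0$, $\mathrm{Gap}_{1+\epsilon}(t)$ stochastically dominates $\mathrm{Gap}(t)$, i.e., $\Pr[\mathrm{Gap}_{1+\epsilon}(t)\le b]\le\Pr[\mathrm{Gap}(t)\le b]$ for all real $b$.
   Context: Weighted balls into weighted bins: $n$ bins with positive integer weights $N_1,\dots,N_n$, $N=\sum_iN_i$; $\mathcal D$ on $[n]$ is $(\alpha,\beta)$-biased: $\frac{N_i}{\alpha N}\le\Pr_{\mathcal D}[i]\le\frac{\beta N_i}{N}$. Each round, two bins are sampled independently from $\mathcal D$ and a unit-weight ball is placed in the sampled bin with smaller value $v_i(t-1)=w_i(t-1)/N_i$ ($w_i(t)$ = number of balls in bin $i$ after round $t$); $\mathrm{Gap}(t)=\max_iv_i(t)-\min_jv_j(t)$. The $(1+\epsilon)$-choice process with $N$ bins: unit-weight balls are thrown into $N$ unit-size bins; at each step, with the bins sorted by load in nonincreasing order, the ball is placed into one of the $i$ most loaded bins with probability $\phi_i=(i/N)^{1+\epsilon}$ (so the $i$-th most loaded bin receives it with probability $\phi_i-\phi_{i-1}$, $\phi_0=0$). $\mathrm{Gap}_{1+\epsilon}(t)$ is the difference between the maximum and minimum bin load of this process after $t$ steps (both processes start empty). *)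

(* Defs.v *)
From HB Require Import structures.
From mathcomp Require Import all_boot all_order all_algebra.
From mathcomp Require Import reals exp.
Set Implicit Arguments. Unset Strict Implicit. Unset Printing Implicit Defensive.
Import Order.TTheory GRing.Theory Num.Theory.
Local Open Scope ring_scope.

Definition wstate (n : nat) := 'I_n -> nat.

Definition wempty (n : nat) : wstate n := fun _ => 0%N.

Definition wadd (n : nat) (w : wstate n) (c : 'I_n) : wstate n :=
  fun k => if k == c then (w k).+1 else w k.

Definition wval (R : realType) (n : nat) (Nw : 'I_n -> nat) (w : wstate n)
  (i : 'I_n) : R := (w i)%:R / (Nw i)%:R.

(* Gap = max_i v_i - min_j v_j = max over pairs (i,j) of v_i - v_j *)
Definition wgap (R : realType) (n : nat) (Nw : 'I_n -> nat) (w : wstate n) : R :=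
  \big[Num.max/0]_(i < n) \big[Num.max/0]_(j < n) (wval R Nw w i - wval R Nw w j).

(* A selection rule: given the current state and the two sampled bins i, j,
   returns the bin receiving the ball. *)
Definition valid_selection (R : realType) (n : nat) (Nw : 'I_n -> nat)
  (sel : wstate n -> 'I_n -> 'I_n -> 'I_n) : Prop :=
  forall w i j,
    (sel w i j = i \/ sel w i j = j) /\
    wval R Nw w (sel w i j) <= wval R Nw w i /\
    wval R Nw w (sel w i j) <= wval R Nw w j.

(* Expectation of f(state after t more rounds), starting from state w:
   each round samples i, j independently from D. *)
Fixpoint wexp (R : realType) (n : nat) (D : 'I_n -> R)
  (sel : wstate n -> 'I_n -> 'I_n -> 'I_n) (f : wstate n -> R)
  (t : nat) (w : wstate n) : R :=
  match t with
  | 0%N => f w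
  | t'.+1 => \sum_(i < n) \sum_(j < n)
              D i * D j * wexp D sel f t' (wadd w (sel w i j))
  end.

Definition wprob_gap_le (R : realType) (n : nat) (Nw : 'I_n -> nat)
  (D : 'I_n -> R) (sel : wstate n -> 'I_n -> 'I_n -> 'I_n) (t : nat) (b : R) : R :=
  wexp D sel (fun w => if wgap R Nw w <= b then 1 else 0) t (@wempty n).

Definition biased (R : realType) (n : nat) (Nw : 'I_n -> nat) (D : 'I_n -> R)
  (alpha beta : R) : Prop :=
  let Ntot := (\sum_(i < n) Nw i)%N in
  (\sum_(i < n) D i = 1) /\
  forall i, (Nw i)%:R / (alpha * Ntot%:R) <= D i /\ D i <= beta * (Nw i)%:R / Ntot%:R.

(* A state is the sequence of bin loads sorted in nonincreasing order. *)
Definition cstate := seq nat.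

Definition cempty (NN : nat) : cstate := nseq NN 0%N.

(* put the ball into the bin at (0-based) rank k, i.e. the (k+1)-th most loaded,
   then re-sort in nonincreasing order *)
Definition cadd (s : cstate) (k : nat) : cstate :=
  sort geq (set_nth 0%N s k (nth 0%N s k).+1).

Definition phi (R : realType) (NN : nat) (eps : R) (i : nat) : R :=
  powR (i%:R / NN%:R) (1 + eps).

(* max load - min load = max over pairs of (a - b) *)
Definition cgap (s : cstate) : nat :=
  (\max_(a <- s) \max_(b <- s) (a - b))%N.

Fixpoint cexp (R : realType) (NN : nat) (eps : R) (f : cstate -> R)
  (t : nat) (s : cstate) : R :=
  match t with
  | 0%N => f s
  | t'.+1 => \sum_(k < NN) (phi NN eps k.+1 - phi NN eps k) * cexp NN eps f t' (cadd s k)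
  end.

Definition cprob_gap_le (R : realType) (NN : nat) (eps : R) (t : nat) (b : R) : R :=
  cexp NN eps (fun s => if (cgap s)%:R <= b then 1 else 0) t (cempty NN).

(* Main.v *)
Require Import Defs.
From HB Require Import structures.
From mathcomp Require Import all_boot all_order all_algebra.
From mathcomp Require Import reals exp.
From mathcomp Require Import convex interval_inference.
From mathcomp Require Import zify ring lra.
Import Order.TTheory GRing.Theory Num.Theory.
Set Implicit Arguments. Unset Strict Implicit. Unset Printing Implicit Defensive.

Definition Asum (x : seq nat) (m : nat) : nat := \sum_(a <- x) (a - m).
Definition Bsum (n : nat) (Nw : 'I_n -> nat) (w : wstate n) (m : nat) : nat :=
  \sum_(i < n) (w i - m * Nw i).

Lemma set_nth_sum (f : nat -> nat) (s : seq nat) k y : k < size s ->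
  \sum_(a <- set_nth 0 s k y) f a + f (nth 0 s k) = \sum_(a <- s) f a + f y.
Proof.
elim: s k => [|a s IH] [|k] //= hk.
- by rewrite !big_cons; lia.
- rewrite !big_cons -addnA IH //; lia.
Qed.

Lemma Aslope (s : seq nat) k c m :
  k <= size s -> (forall i, k <= i < size s -> nth 0 s i <= c) -> c <= m ->
  Asum s c <= Asum s m + k * (m - c).
Proof.
rewrite /Asum; elim: s k => [|a s IH] [|k] //= hk hi hcm; first by rewrite !big_nil.
- have -> : \sum_(b <- a :: s) (b - c) = 0 by
    apply: big1_seq => b /andP[_ /(nthP 0) [i hi' <-]]; move: (hi i hi'); rewrite -subn_eq0 => /eqP.
  by [].
- rewrite !big_cons.
  have := IH k hk (fun i hh => hi i.+1 hh) hcm.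
  rewrite mulSn; lia.
Qed.

Lemma Bslope n (Nw : 'I_n -> nat) (w : wstate n) (P : pred 'I_n) c m :
  c <= m -> (forall j, P j -> m * Nw j <= w j) ->
  Bsum Nw w m + (m - c) * \sum_(j < n | P j) Nw j <= Bsum Nw w c.
Proof.
move=> hcm hP; rewrite /Bsum big_distrr /= [X in _ + X <= _]big_mkcond /= -big_split /=.
apply: leq_sum => j _.
have h1 : c * Nw j <= m * Nw j by apply: leq_mul.
case: (boolP (P j)) => Pj.
- have := hP j Pj; rewrite mulnBl; lia.
- by rewrite addn0; apply: leq_sub2l.
Qed.

Definition Inv n (Nw : 'I_n -> nat) (x : cstate) (w : wstate n) : Prop :=
  [/\ size x = (\sum_(i < n) Nw i)%N, sorted geq x,
      (\sum_(a <- x) a = \sum_(i < n) w i)%N & forall m, Bsum Nw w m <= Asum x m].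

Definition Lw (R : realType) n (Nw : 'I_n -> nat) (w : wstate n) (b : 'I_n) : nat :=
  \sum_(j < n | (wval R Nw w b <= wval R Nw w j)%R) Nw j.

Lemma wval_le_nat (R : realType) n (Nw : 'I_n -> nat) (w : wstate n) i m :
  0 < Nw i -> (m * Nw i <= w i) = (m%:R <= wval R Nw w i)%R.
Proof.
move=> h; rewrite /wval ler_pdivlMr ?ltr0n // -natrM ler_nat //.
Qed.

Lemma wadd_sum n (w : wstate n) b (f : nat -> nat -> nat) (g : 'I_n -> nat) :
  \sum_(i < n) f (wadd w b i) (g i) + f (w b) (g b) =
  \sum_(i < n) f (w i) (g i) + f (w b).+1 (g b).
Proof.
rewrite (bigD1 b) //= [in RHS](bigD1 b) //= /wadd eqxx.
have -> : \sum_(i < n | i != b) f (if i == b then (w i).+1 else w i) (g i) =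
          \sum_(i < n | i != b) f (w i) (g i).
  by apply: eq_bigr => i /negbTE ->.
set A := f (w b).+1 (g b). set B := f (w b) (g b). set S := \sum_(i < n | i != b) _. lia.
Qed.

Lemma step_inv (R : realType) n (Nw : 'I_n -> nat) x w k b :
  (forall i, 0 < Nw i) -> Inv Nw x w -> k < \sum_(i < n) Nw i ->
  k < Lw R Nw w b -> Inv Nw (cadd x k) (wadd w b).
Proof.
move=> hN [hs hso hsum hmaj] hkN hkL.
have hk : k < size x by rewrite hs.
set xk := nth 0 x k.
have sz : size (set_nth 0 x k xk.+1) = size x.
  by rewrite size_set_nth; apply/maxn_idPr.
have hsort : forall f : nat -> nat,
    \sum_(a <- cadd x k) f a = \sum_(a <- set_nth 0 x k xk.+1) f a.
  by move=> f; rewrite /cadd; apply: perm_big; rewrite perm_sort.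
split.
- by rewrite /cadd size_sort sz.
- by apply: sort_sorted => a c; apply: leq_total.
- rewrite hsort.
  have := @set_nth_sum id x k xk.+1 hk.
  have := @wadd_sum n w b (fun a _ => a) (fun _ => 0).
  rewrite /= -hsum -/xk; lia.
- move=> m.
  have hA := @set_nth_sum (fun a => a - m) x k xk.+1 hk.
  have hB := @wadd_sum n w b (fun a c => a - m * c) Nw.
  rewrite /= -/xk in hA hB.
  rewrite /Asum hsort /Bsum.
  have hm := hmaj m; rewrite /Asum /Bsum in hm.
  set mb := m * Nw b in hB.
  set A1 := \sum_(a <- set_nth 0 x k xk.+1) (a - m) in hA *.
  set A0 := \sum_(a <- x) (a - m) in hA hm *.
  set B1 := \sum_(i < n) (wadd w b i - m * Nw i) in hB *.
  set B0 := \sum_(i < n) (w i - m * Nw i) in hB hm *.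
  have [hmx|hmx] := leqP m xk; first lia.
  have [hwb|hwb] := leqP mb (w b); last lia.
  have hAs := @Aslope x k xk m (ltnW hk).
  have hAs' : Asum x xk <= Asum x m + k * (m - xk).
    apply: hAs; last exact: ltnW.
    move=> i /andP[hki hi].
    have := sorted_leq_nth (leT:=geq) (fun y x z (h1 : y <= x) (h2 : z <= y) => leq_trans h2 h1) (fun a => leqnn a) 0 hso.
    by move=> /(_ k i); rewrite !inE hk hi => /(_ isT isT hki).
  have hBs : Bsum Nw w m + (m - xk) * Lw R Nw w b <= Bsum Nw w xk.
    apply: Bslope; first exact: ltnW.
    move=> j hj; rewrite (wval_le_nat R) //.
    apply: le_trans hj; rewrite -(wval_le_nat R) //.
  have hmk := hmaj xk.
  set d := m - xk in hAs' hBs.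
  have d1 : 0 < d by rewrite /d subn_gt0.
  have hdL : d * k.+1 <= d * Lw R Nw w b by rewrite leq_mul2l hkL orbT.
  rewrite mulnS in hdL.
  rewrite [k * d]mulnC in hAs'.
  rewrite /Asum /Bsum in hAs' hBs hmk.
  lia.
Qed.

Lemma init_inv n (Nw : 'I_n -> nat) :
  Inv Nw (cempty (\sum_(i < n) Nw i)) (@wempty n).
Proof.
rewrite /cempty /wempty; split.
- by rewrite size_nseq.
- by elim: (\sum_(i < n) Nw i) => //= k; case: k.
- rewrite [RHS]big1 //; apply: big1_seq => a /andP[_ /nseqP[-> _]] //.
- move=> m; rewrite /Bsum big1 //.
Qed.

Lemma term0 n (F : 'I_n -> nat) j : \sum_(i < n) F i = 0 -> F j = 0.
Proof. by move=> h; apply/eqP; rewrite -leqn0 -h (bigD1 j) //= leq_addr. Qed.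

Lemma gap_le (R : realType) n (Nw : 'I_n -> nat) x w :
  (forall i, 0 < Nw i) -> Inv Nw x w -> 0 < size x ->
  (wgap R Nw w <= (cgap x)%:R)%R.
Proof.
move=> hN [hs hso hsum hmaj] hx.
set xM := nth 0 x 0.
set xm := nth 0 x (size x).-1.
have hnth : forall i j, i <= j < size x -> nth 0 x j <= nth 0 x i.
  move=> i j /andP[hij hj].
  have := sorted_leq_nth (leT:=geq) (fun y x z (h1 : y <= x) (h2 : z <= y) => leq_trans h2 h1) (fun a => leqnn a) 0 hso.
  by move=> /(_ i j); rewrite !inE hj (leq_ltn_trans hij hj) => /(_ isT isT hij).
have hbnd : forall a, a \in x -> xm <= a <= xM.
  move=> a /(nthP 0) [i hi <-]; rewrite /xm /xM.
  apply/andP; split; apply: hnth.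
  - by rewrite ltn_predL hx andbT -ltnS prednK.
  - by rewrite leq0n hi.
have xMin : xM \in x by apply: mem_nth.
have xmin : xm \in x by apply: mem_nth; rewrite prednK.
have hmM : xm <= xM by case/andP: (hbnd _ xmin).
have hup : forall j, w j <= xM * Nw j.
  move=> j; have h := hmaj xM.
  have hA : Asum x xM = 0.
    by apply: big1_seq => a /andP[_ /hbnd /andP[_ h']]; apply/eqP; rewrite subn_eq0.
  rewrite hA leqn0 in h.
  have := term0 j (eqP h); move/eqP; rewrite subn_eq0 //.
have hlo : forall j, xm * Nw j <= w j.
  move=> j.
  have h := hmaj xm.
  have eA : Asum x xm + size x * xm = \sum_(a <- x) a + \sum_(a <- x) (xm - a).
    rewrite /Asum; elim: (x) => [|a s IH]; first by rewrite !big_nil.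
    rewrite !big_cons /= mulSn; lia.
  have eA0 : \sum_(a <- x) (xm - a) = 0.
    by apply: big1_seq => a /andP[_ /hbnd /andP[h' _]]; apply/eqP; rewrite subn_eq0.
  have eB : Bsum Nw w xm + xm * \sum_(i < n) Nw i =
            \sum_(i < n) w i + \sum_(i < n) (xm * Nw i - w i).
    have e1 : \sum_(i < n) ((w i - xm * Nw i) + xm * Nw i) =
              \sum_(i < n) (w i + (xm * Nw i - w i)) by apply: eq_bigr => i _; lia.
    by rewrite !big_split /= -big_distrr /= in e1.
  have : \sum_(i < n) (xm * Nw i - w i) = 0.
    move: eA eB; rewrite eA0 hs -hsum; lia.
  by move/(term0 j)/eqP; rewrite subn_eq0.
have vup : forall j, (wval R Nw w j <= xM%:R)%R.
  by move=> j; rewrite /wval ler_pdivrMr ?ltr0n // -natrM ler_nat.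
have vlo : forall j, (xm%:R <= wval R Nw w j)%R.
  by move=> j; rewrite /wval ler_pdivlMr ?ltr0n // -natrM ler_nat.
have hc : xM - xm <= cgap x.
  rewrite /cgap; apply: (leq_trans _ (leq_bigmax_seq xM xMin isT)).
  exact: (leq_bigmax_seq xm xmin isT).
have K0 : (0 <= (cgap x)%:R :> R)%R by [].
rewrite /wgap.
apply: (big_ind (fun z : R => z <= (cgap x)%:R)%R) => //.
  by move=> a c ha hc'; rewrite ge_max ha hc'.
move=> i _.
apply: (big_ind (fun z : R => z <= (cgap x)%:R)%R) => //.
  by move=> a c ha hc'; rewrite ge_max ha hc'.
move=> j _.
apply: (@le_trans _ _ (xM%:R - xm%:R)%R).
  by apply: lerB.
by rewrite -natrB // ler_nat.
Qed.

Local Open Scope ring_scope.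
Local Open Scope ring_scope.

Section Analytic.
Variable R : realType.

Lemma lerM2l (z x y : R) : 0 <= z -> x <= y -> z * x <= z * y.
Proof. by move=> h1 h2; rewrite ler_wpM2l. Qed.
Lemma lerM2r (z x y : R) : 0 <= z -> x <= y -> x * z <= y * z.
Proof. by move=> h1 h2; rewrite ler_wpM2r. Qed.

Lemma bern (r c : R) : 0 < r -> 0 <= c <= 1 -> r `^ c <= c * r + (1 - c).
Proof.
move=> r0 /andP[c0 c1].
have := @concave_ln R (Itv01 c0 c1) r 1 r0 ltr01.
rewrite !convRE /= /unstable.onem ln1 mulr0 addr0 mulr1.
have hp : 0 < c * r + (1 - c).
  have [->|cn0] := eqVneq c 0; first by rewrite mul0r add0r subr0.
  have cp : 0 < c by rewrite lt_neqAle eq_sym cn0 c0.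
  by apply: ltr_pwDl; [exact: mulr_gt0|rewrite subr_ge0].
move=> h; rewrite /powR gt_eqF // -(lnK hp) ler_expR; exact: h.

Qed.

Lemma bernM (a s c : R) : 0 < a -> 0 < s -> 0 <= c <= 1 ->
  a `^ c <= (c * (a / s) + (1 - c)) * s `^ c.
Proof.
move=> a0 s0 hc.
have ha : a = (a / s) * s by rewrite divfK // gt_eqF.
rewrite {1}ha powRM; last 2 first.
- by apply: ltW; apply: divr_gt0.
- exact: ltW.
rewrite ler_pM2r ?powR_gt0 //.
by apply: bern => //; apply: divr_gt0.
Qed.

Lemma analytic (alpha beta eps s d : R) : 1 < alpha -> 1 < beta -> 0 < eps ->
  eps <= 2 * ln ((alpha * beta - 1) / (alpha * beta - beta))
           / ln ((alpha * beta - 1) / (alpha - 1)) - 1 ->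
  0 < s -> s <= 1 -> 0 <= d -> d <= beta * s -> d <= 1 - (1 - s) / alpha ->
  d ^+ 2 <= s `^ (1 + eps).
Proof.
move=> a1 b1 e0 he s0' s1 d0 dbs dal.
set x := alpha * beta.
have x1 : 0 < x - 1 by rewrite subr_gt0 /x; nra.
have xb : 0 < x - beta by rewrite subr_gt0 /x; nra.
have a10 : 0 < alpha - 1 by rewrite subr_gt0.
set s0 := (alpha - 1) / (x - 1).
set f0 := (x - beta) / (x - 1).
have s0p : 0 < s0 by apply: divr_gt0.
have s0l1 : s0 < 1 by rewrite ltr_pdivrMr // mul1r ltrBlDr subrK /x; nra.
have f0p : 0 < f0 by apply: divr_gt0.
have f0e : f0 = beta * s0 by rewrite /f0 /s0 /x; field; rewrite gt_eqF.
have l0 : ln ((x - 1) / (alpha - 1)) = - ln s0.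
  by rewrite -lnV ?posrE // invf_div.
have l1 : ln ((x - 1) / (x - beta)) = - ln f0.
  by rewrite -lnV ?posrE // invf_div.
have lsn : ln s0 < 0 by apply: ln_lt0; rewrite s0p s0l1.
rewrite -/x l0 l1 in he.
set c := (1 + eps) / 2.
have hc : c * ln s0 >= ln f0.
  have : eps + 1 <= 2 * - ln f0 / - ln s0 by rewrite lerBrDr in he.
  rewrite ler_pdivlMr ?oppr_gt0 // => h.
  rewrite /c; nra.
have fC : f0 <= s0 `^ c.
  rewrite /powR gt_eqF // -[X in X <= _](@lnK R f0) ?posrE // ler_expR; exact: hc.
have c0 : 0 < c by rewrite /c divr_gt0 //; lra.
have c1 : c < 1.
  rewrite ltNge; apply/negP => c1.
  have s01 : 0 < s0 <= 1 by rewrite s0p (ltW s0l1).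
  have h : s0 `^ c <= s0 `^ 1 := ger_powR s01 c1.
  rewrite powRr1 in h; last exact: ltW.
  have : s0 < f0 by rewrite f0e; nra.
  lra.
have e2 : 1 + eps = c * 2%:R by rewrite /c; field.
rewrite e2 powRrM powR_mulrn ?powR_ge0 //.
suff : d <= s `^ c.
  move=> h; rewrite expr2 [X in _ <= X]expr2.
  by apply: ler_pM => //.
have Ap : 0 < s `^ c by apply: powR_gt0.
have Cp : 0 < s0 `^ c by apply: powR_gt0.
have [ss0|s0s] := leP s s0.
-
  apply: (le_trans dbs).
  have eA : s = s `^ c * s `^ (1 - c).
    rewrite -powRD; last by apply/implyP => _; rewrite gt_eqF.
    have -> : c + (1 - c) = 1 by ring.
    by rewrite powRr1 //; exact: ltW.
  have eC : s0 = s0 `^ c * s0 `^ (1 - c).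
    rewrite -powRD; last by apply/implyP => _; rewrite gt_eqF.
    have -> : c + (1 - c) = 1 by ring.
    by rewrite powRr1 //; exact: ltW.
  have BE : s `^ (1 - c) <= s0 `^ (1 - c).
    apply: ge0_ler_powR => //.
    - by rewrite subr_ge0; exact: ltW.
    - by rewrite nnegrE; exact: ltW.
    - by rewrite nnegrE; exact: ltW.
  have Bp : 0 <= s `^ (1 - c) by apply: powR_ge0.
  have bE : beta * s0 `^ (1 - c) <= 1.
    rewrite -(ler_pM2l Cp) mulr1 mulrCA -eC -f0e //.
  rewrite {1}eA.
  have : beta * (s `^ c * s `^ (1 - c)) <= s `^ c * (beta * s0 `^ (1 - c)).
    rewrite mulrCA; apply: lerM2l; [exact: ltW|].
    by apply: lerM2l; [lra|].
  move=> h; apply: (le_trans h); rewrite -[X in _ <= X]mulr1.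
  by apply: lerM2l; [exact: ltW|].
-
  apply: (le_trans dal).
  have hc' : 0 <= c <= 1 by rewrite (ltW c0) (ltW c1).
  have T1 := @bernM s0 s c s0p s0' hc'.
  have T2 := @bernM 1 s c ltr01 s0' hc'.
  rewrite powR1 in T2.
  set A := s `^ c in T1 T2 Ap *.
  set C := s0 `^ c in T1 fC Cp.
  set lam := (1 - s) / (1 - s0).
  have lam1 : lam <= 1.
    rewrite ler_pdivrMr; last by rewrite subr_gt0.
    rewrite mul1r; lra.
  have lam0 : 0 <= lam by apply: divr_ge0; rewrite subr_ge0 //; exact: ltW.
  have es : s = lam * s0 + (1 - lam).
    rewrite /lam; field; rewrite subr_eq0 eq_sym; apply/negP => /eqP h.
    by move: s0l1; rewrite h ltxx.
  have el : 1 - (1 - s) / alpha = lam * f0 + (1 - lam).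
    rewrite /lam /f0 /s0 /x; field.
    rewrite -/x; apply/and3P; split; rewrite ?gt_eqF //; last lra.
    rewrite subr_gt0 /x; nra.
  rewrite el.
  have st1 : lam * f0 + (1 - lam) <= lam * C + (1 - lam).
    by rewrite lerD2r; apply: lerM2l.
  apply: (le_trans st1).
  have st2 : lam * C + (1 - lam) <=
      lam * ((c * (s0 / s) + (1 - c)) * A) + (1 - lam) * ((c * (1 / s) + (1 - c)) * A).
    apply: lerD; first by apply: lerM2l.
    by rewrite -[X in X <= _]mulr1; apply: lerM2l; rewrite ?subr_ge0.
  apply: (le_trans st2); rewrite le_eqVlt; apply/orP; left; apply/eqP.
  have -> : lam * ((c * (s0 / s) + (1 - c)) * A) + (1 - lam) * ((c * (1 / s) + (1 - c)) * A)
    = (c * ((lam * s0 + (1 - lam)) / s) + (1 - c)) * A by field; rewrite gt_eqF.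
  by rewrite -es divff ?gt_eqF // mulr1 subrKC mul1r.
Qed.
End Analytic.
Local Open Scope ring_scope.

Section Coupling.
Variable R : realFieldType.

Lemma abel (N : nat) (d H : nat -> R) :
  \sum_(k < N.+1) d k * H k = (\sum_(k < N.+1) d k) * H N
     - \sum_(k < N) (\sum_(j < k.+1) d j) * (H k.+1 - H k).
Proof.
elim: N => [|N IH]; first by rewrite !big_ord1 big_ord0 subr0.
rewrite big_ord_recr /= IH.
rewrite [\sum_(k < N.+2) d k]big_ord_recr /=.
rewrite [\sum_(k < N.+1) (\sum_(j < k.+1) d j) * _]big_ord_recr /=.
set S := \sum_(j < N.+1) d j.
set T := \sum_(k < N) _.
ring.
Qed.

Lemma dominance (N : nat) (p r H : nat -> R) :
  (forall m, (m <= N)%N -> \sum_(k < m) r k <= \sum_(k < m) p k) ->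
  \sum_(k < N) r k = \sum_(k < N) p k ->
  (forall k, H k <= H k.+1) ->
  \sum_(k < N) p k * H k <= \sum_(k < N) r k * H k.
Proof.
case: N => [|N] hcum htot hmono; first by rewrite !big_ord0.
rewrite -subr_ge0 -sumrB.
have -> : \sum_(i < N.+1) (r i * H i - p i * H i) = \sum_(i < N.+1) (r i - p i) * H i.
  by apply: eq_bigr => i _; rewrite mulrBl.
rewrite (abel N (fun k => r k - p k) H).
have -> : \sum_(k < N.+1) (r k - p k) = 0 by rewrite sumrB htot subrr.
rewrite mul0r sub0r oppr_ge0.
apply: sumr_le0 => k _.
apply: mulr_le0_ge0; last by rewrite subr_ge0.
rewrite sumrB subr_le0; apply: hcum.
by rewrite ltnS ltnW.
Qed.

Lemma bigmin_le_idx (I : Type) (s : seq I) (P : pred I) (f : I -> R) (x : R) :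
  \big[Num.min/x]_(i <- s | P i) f i <= x.
Proof.
elim: s => [|a s IH]; first by rewrite big_nil.
rewrite big_cons; case: (P a) => //.
by rewrite ge_min IH orbT.
Qed.

Lemma bigmin_le (I : eqType) (s : seq I) (P : pred I) (f : I -> R) (x : R) j :
  j \in s -> P j -> \big[Num.min/x]_(i <- s | P i) f i <= f j.
Proof.
elim: s => [|a s IH] //; rewrite in_cons big_cons => /orP[/eqP <-|js] Pj.
  by rewrite Pj ge_min lexx.
case: (P a); last exact: IH.
by rewrite ge_min IH ?orbT.
Qed.

Lemma sum_ind_one (N l : nat) (X : nat -> R) : (0 < l <= N)%N ->
  \sum_(k < N) (l == k.+1)%:R * X k = X l.-1.
Proof.
case: l => // l /= hl.
rewrite (bigD1 (Ordinal hl)) //= eqxx mul1r big1 ?addr0 // => j hj.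
have -> : (l.+1 == j.+1) = false.
  by apply/negP => /eqP [] hh; move: hj; rewrite -val_eqE /= hh eqxx.
by rewrite mul0r.
Qed.

Lemma sum_ind_cum (m l : nat) : (0 < l)%N ->
  \sum_(k < m) (l == k.+1)%:R = (l <= m)%:R :> R.
Proof.
move=> l0; elim: m => [|m IH]; first by rewrite big_ord0 leqNgt l0.
rewrite big_ord_recr /= IH.
have [hlm|hlm] := leqP l m.
  by rewrite (leq_trans hlm (leqnSn m)) (_ : (l == m.+1) = false) ?addr0 //;
     apply/negP => /eqP e; move: hlm; rewrite e ltnn.
by rewrite add0r leq_eqVlt ltnS leqNgt hlm orbF.
Qed.

Lemma coupling (I : finType) (N : nat) (p : nat -> R) (q : I -> R) (L : I -> nat)
  (F : nat -> R) (G : I -> R) (i0 : I) :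
  (forall k, 0 <= p k) -> (forall i, 0 <= q i) -> (forall i, 0 < L i <= N)%N ->
  (N <= L i0)%N ->
  \sum_i q i = \sum_(k < N) p k ->
  (forall m, (m <= N)%N -> \sum_(i | (L i <= m)%N) q i <= \sum_(k < m) p k) ->
  (forall k i, (k < N)%N -> (k < L i)%N -> F k <= G i) ->
  \sum_(k < N) p k * F k <= \sum_i q i * G i.
Proof.
move=> p0 q0 hL hi0 htot hcum hFG.
pose H k := \big[Num.min/G i0]_(i | (k < L i)%N) G i.
have HG : forall k i, (k < L i)%N -> H k <= G i.
  by move=> k i hk; apply: bigmin_le => //; rewrite mem_index_enum.
have HF : forall k, (k < N)%N -> F k <= H k.
  move=> k hk; apply: (big_ind (fun x => F k <= x)).
  - by apply: hFG => //; apply: leq_trans hi0.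
  - by move=> x y hx hy; rewrite le_min hx hy.
  - by move=> i hi; apply: hFG.
have Hmono : forall k, H k <= H k.+1.
  move=> k; apply: (big_ind (fun x => H k <= x)).
  - exact: bigmin_le_idx.
  - by move=> x y hx hy; rewrite le_min hx hy.
  - by move=> i hi; apply: HG; apply: ltnW.
pose r k := \sum_i q i * (L i == k.+1)%:R.
have hr : forall m, \sum_(k < m) r k = \sum_i q i * (L i <= m)%:R.
  move=> m; rewrite /r exchange_big /=; apply: eq_bigr => i _.
  by rewrite -mulr_sumr sum_ind_cum //; case/andP: (hL i).
have step1 : \sum_(k < N) p k * F k <= \sum_(k < N) p k * H k.
  by apply: ler_sum => k _; apply: ler_wpM2l => //; apply: HF.
apply: (le_trans step1).
have step2 : \sum_(k < N) p k * H k <= \sum_(k < N) r k * H k.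
  have hmk : forall m, \sum_(i | (L i <= m)%N) q i = \sum_i q i * (L i <= m)%:R.
    move=> m; rewrite big_mkcond /=; apply: eq_bigr => i _.
    by case: (L i <= m)%N; rewrite ?mulr1 ?mulr0.
  apply: dominance => //.
  - by move=> m hm; rewrite hr -hmk; exact: hcum.
  - rewrite hr -hmk -htot; apply: eq_bigl => i.
    by case/andP: (hL i) => _ ->.
apply: (le_trans step2).
have step3 : \sum_(k < N) r k * H k = \sum_i q i * H (L i).-1.
  rewrite /r.
  have -> : \sum_(k < N) (\sum_i q i * (L i == k.+1)%:R) * H k =
            \sum_(k < N) \sum_i q i * ((L i == k.+1)%:R * H k).
    by apply: eq_bigr => k _; rewrite mulr_suml; apply: eq_bigr => i _; rewrite mulrA.
  rewrite exchange_big /=; apply: eq_bigr => i _.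
  by rewrite -mulr_sumr sum_ind_one.
rewrite step3; apply: ler_sum => i _; apply: ler_wpM2l => //.
apply: HG; case/andP: (hL i) => hl _.
by rewrite prednK.
Qed.
End Coupling.
Local Open Scope ring_scope.

Lemma argmin_ex (R : realType) (I : finType) (P : pred I) (f : I -> R) (i0 : I) :
  P i0 -> exists2 c, P c & forall j, P j -> f c <= f j.
Proof.
move=> Pi0; case: (@arg_minP _ R I i0 P f Pi0) => c Pc hc.
by exists c.
Qed.

Lemma sum_pick (R : realType) n (c0 : 'I_n) (X : 'I_n -> R) :
  \sum_(c < n) (c0 == c)%:R * X c = X c0.
Proof.
rewrite (bigD1 c0) //= eqxx mul1r big1 ?addr0 // => c hc.
by rewrite eq_sym (negbTE hc) mul0r.
Qed.

Lemma phi_mono (R : realType) (NN : nat) (eps : R) (a c : nat) : 0 < eps -> (a <= c)%N -> phi NN eps a <= phi NN eps c.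
Proof.
move=> e0 ac; rewrite /phi; apply: ge0_ler_powR.
- lra.
- by rewrite nnegrE divr_ge0.
- by rewrite nnegrE divr_ge0.
- by rewrite ler_wpM2r ?invr_ge0 ?ler0n // ler_nat.
Qed.

Lemma phi0 (R : realType) (NN : nat) (eps : R) : 0 < eps -> phi NN eps 0 = 0.
Proof. move=> e0. by rewrite /phi mul0r powR0 //; apply/eqP; lra. Qed.

Lemma phiN (R : realType) (NN : nat) (eps : R) : (0 < NN)%N -> phi NN eps NN = 1.
Proof. move=> NN0. by rewrite /phi divff ?powR1 // pnatr_eq0 -lt0n. Qed.

Lemma phi_sum (R : realType) (NN : nat) (eps : R) m : 0 < eps -> \sum_(k < m) (phi NN eps k.+1 - phi NN eps k) = phi NN eps m.
Proof.
move=> e0; rewrite -(big_mkord xpredT (fun k => phi NN eps k.+1 - phi NN eps k)).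
by rewrite telescope_sumr // (phi0 NN e0) subr0.
Qed.

Lemma q_sum (R : realType) n (D : 'I_n -> R) (S : 'I_n -> 'I_n -> 'I_n) (X : 'I_n -> R) :
  \sum_(c < n) (\sum_(i < n) \sum_(j < n) D i * D j * (S i j == c)%:R) * X c =
  \sum_(i < n) \sum_(j < n) D i * D j * X (S i j).
Proof.
have -> : \sum_(c < n) (\sum_(i < n) \sum_(j < n) D i * D j * (S i j == c)%:R) * X c =
   \sum_(c < n) \sum_(i < n) \sum_(j < n) D i * D j * ((S i j == c)%:R * X c).
  apply: eq_bigr => c _; rewrite mulr_suml; apply: eq_bigr => i _.
  by rewrite mulr_suml; apply: eq_bigr => j _; rewrite mulrA.
rewrite exchange_big /=; apply: eq_bigr => i _.
rewrite exchange_big /=; apply: eq_bigr => j _.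
by rewrite -mulr_sumr sum_pick.
Qed.

Lemma sum_cond_ind (R : realType) n (P : pred 'I_n) (F : 'I_n -> R) :
  \sum_(i < n | P i) F i = \sum_(i < n) F i * (P i)%:R.
Proof.
by rewrite big_mkcond /=; apply: eq_bigr => i _; case: (P i); rewrite ?mulr1 ?mulr0.
Qed.

Theorem lemma1 (R : realType) (n : nat) (Nw : 'I_n -> nat) (D : 'I_n -> R)
  (alpha beta eps : R)
  (sel : wstate n -> 'I_n -> 'I_n -> 'I_n) :
  (forall i, (0 < Nw i)%N) ->
  1 < alpha -> 1 < beta ->
  biased Nw D alpha beta ->
  valid_selection R Nw sel ->
  0 < eps ->
  eps <= 2 * ln ((alpha * beta - 1) / (alpha * beta - beta))
           / ln ((alpha * beta - 1) / (alpha - 1)) - 1 ->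
  forall (t : nat) (b : R),
    cprob_gap_le (\sum_(i < n) Nw i)%N eps t b <= wprob_gap_le Nw D sel t b.
Proof.
move=> hN a1 b1 hb hsel e0 he t b.
rewrite /biased /= in hb; case: hb => hD1 hDb.
set NN := (\sum_(i < n) Nw i)%N in hDb *.
have [i0 _] : exists i0 : 'I_n, true.
  case: (pickP (fun _ : 'I_n => true)) => [i0 _|h0]; first by exists i0.
  by move: hD1; rewrite big_pred0 // => /eqP; rewrite eq_sym oner_eq0.
have NN0 : (0 < NN)%N.
  by rewrite /NN (bigD1 i0) //= (leq_trans (hN i0)) // leq_addr.
have NNr : (0 : R) < NN%:R by rewrite ltr0n.
have D0 : forall i, 0 <= D i.
  move=> i; case: (hDb i) => h _; apply: le_trans h.
  by apply: divr_ge0 => //; apply: mulr_ge0; [lra|].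
rewrite /cprob_gap_le /wprob_gap_le.
set hh := fun s : cstate => _.
set gg := fun w : wstate n => _.
suff main : forall t x w, Inv Nw x w -> cexp NN eps hh t x <= wexp D sel gg t w.
  by apply: main; apply: init_inv.
elim=> [|t' IH] x w hinv.
- rewrite /= /hh /gg.
  case: ifP => hc; last by case: ifP => _; lra.
  have hx : (0 < size x)%N by case: hinv => -> _ _ _.
  have := gap_le R hN hinv hx => hg.
  by rewrite ifT //; apply: le_trans hg hc.
- rewrite [cexp _ _ _ _ _]/= [wexp _ _ _ _ _]/=.
  set G := fun c => wexp D sel gg t' (wadd w c).
  set q := fun c => \sum_(i < n) \sum_(j < n) D i * D j * (sel w i j == c)%:R.
  set v := wval R Nw w.
  set L := Lw R Nw w.
  have eR : \sum_(i < n) \sum_(j < n) D i * D j * wexp D sel gg t' (wadd w (sel w i j))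
            = \sum_(c < n) q c * G c.
    by rewrite /q /G q_sum.
  rewrite eR.
  have [c0 _ hc0] := argmin_ex v (i0 := i0) (P := xpredT) isT.
  have hL : forall c, (0 < L c <= NN)%N.
    move=> c; apply/andP; split.
      by rewrite /L /Lw (bigD1 c) //= (leq_trans (hN c)) // leq_addr.
    by rewrite /L /Lw /NN [X in (_ <= X)%N](bigID (fun j => v c <= v j)) /= leq_addr.
  have hLc0 : (NN <= L c0)%N.
    by rewrite /L /Lw /NN; apply: eq_leq; apply: eq_bigl => j; rewrite hc0.
  have sumD2 : \sum_(i < n) \sum_(j < n) D i * D j = 1.
    have -> : \sum_(i < n) \sum_(j < n) D i * D j = (\sum_(i < n) D i) * (\sum_(j < n) D j).
      by rewrite mulr_suml; apply: eq_bigr => i _; rewrite mulr_sumr.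
    by rewrite hD1 mulr1.
  apply: (@coupling R 'I_n NN (fun k => phi NN eps k.+1 - phi NN eps k) q L
            (fun k => cexp NN eps hh t' (cadd x k)) G c0).
  - by move=> k; rewrite subr_ge0; apply: phi_mono.
  - move=> c; apply: sumr_ge0 => i _; apply: sumr_ge0 => j _.
    by apply: mulr_ge0; [apply: mulr_ge0|].
  - exact: hL.
  - exact: hLc0.
  - rewrite phi_sum // phiN //.
    have -> : \sum_(c < n) q c = \sum_(c < n) q c * 1 by apply: eq_bigr => c _; rewrite mulr1.
    rewrite /q q_sum.
    by rewrite -[RHS]sumD2; apply: eq_bigr => i _; apply: eq_bigr => j _; rewrite mulr1.
  - move=> m hm; rewrite phi_sum //.
    rewrite sum_cond_ind /q q_sum.
    case: (pickP (fun c => (L c <= m)%N)) => [c1 hc1|none]; last first.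
      rewrite big1 ?powR_ge0 // => i _; rewrite big1 // => j _.
      by rewrite none mulr0.
    have [bs hbs hbmin] := argmin_ex v (i0 := c1) (P := fun c => (L c <= m)%N) hc1.
    set U := fun j => v bs <= v j.
    set d := \sum_(i < n) D i * (U i)%:R.
    have st : \sum_(i < n) \sum_(j < n) D i * D j * (L (sel w i j) <= m)%N%:R
              <= \sum_(i < n) \sum_(j < n) (D i * (U i)%:R) * (D j * (U j)%:R).
      apply: ler_sum => i _; apply: ler_sum => j _.
      case: (boolP (L (sel w i j) <= m)%N) => hs; last first.
        by rewrite mulr0; apply: mulr_ge0; apply: mulr_ge0 => //; apply: ler0n.
      have hvs := hbmin _ hs.
      case: (hsel w i j) => _ [hi hj].
      have -> : U i by rewrite /U; apply: le_trans hvs hi.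
      have -> : U j by rewrite /U; apply: le_trans hvs hj.
      by rewrite !mulr1.
    apply: (le_trans st).
    have -> : \sum_(i < n) \sum_(j < n) (D i * (U i)%:R) * (D j * (U j)%:R) = d ^+ 2.
      by rewrite expr2 /d mulr_suml; apply: eq_bigr => i _; rewrite mulr_sumr.
    have ed : d = \sum_(i < n | U i) D i by rewrite sum_cond_ind.
    have eL : (L bs)%:R = \sum_(i < n | U i) (Nw i)%:R :> R by rewrite /L /Lw natr_sum.
    have eNN : NN%:R = (L bs)%:R + \sum_(i < n | ~~ U i) (Nw i)%:R :> R.
      by rewrite eL -!natr_sum -natrD /NN (bigID U).
    set s : R := (L bs)%:R / NN%:R.
    have hLb := hL bs.
    have s0 : 0 < s by rewrite divr_gt0 // ltr0n; case/andP: hLb.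
    have s1 : s <= 1.
      by rewrite ler_pdivrMr // mul1r ler_nat; case/andP: hLb.
    have d0 : 0 <= d by rewrite ed; apply: sumr_ge0.
    have dup1 : d <= beta * s.
      rewrite ed /s eL mulr_suml mulr_sumr; apply: ler_sum => i _.
      case: (hDb i) => _ h; apply: (le_trans h).
      by rewrite mulrA.
    have dup2 : d <= 1 - (1 - s) / alpha.
      have e1 : 1 = d + \sum_(i < n | ~~ U i) D i by rewrite -hD1 ed (bigID U).
      have lo : \sum_(i < n | ~~ U i) (Nw i)%:R / (alpha * NN%:R) <= \sum_(i < n | ~~ U i) D i.
        by apply: ler_sum => i _; case: (hDb i).
      rewrite -mulr_suml in lo.
      have -> : 1 - (1 - s) / alpha = 1 - (\sum_(i < n | ~~ U i) (Nw i)%:R) / (alpha * NN%:R).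
        have -> : \sum_(i < n | ~~ U i) (Nw i)%:R = NN%:R - (L bs)%:R :> R by rewrite eNN; ring.
        rewrite /s; field; rewrite gt_eqF //; lra.
      lra.
    apply: (le_trans (analytic a1 b1 e0 he s0 s1 d0 dup1 dup2)).
    rewrite /phi; apply: ge0_ler_powR.
    + lra.
    + by rewrite nnegrE ltW.
    + by rewrite nnegrE divr_ge0.
    + by rewrite /s ler_wpM2r ?invr_ge0 ?ler0n // ler_nat.
  - move=> k c hk hkc; apply: IH.
    exact: (step_inv hN hinv hk hkc).
Qed.
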